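(* Let $\lambda$ be a partition, $T\in\mathcal{T}_\lambda$, let $Y\in\mathcal{T}_\lambda$ be a $\lambda$-key, and let $\pi$ be an $R_\lambda$-permutation. Then: (i) $S(T)$ is a $\lambda$-key (in particular $S(T)\in\mathcal{T}_\lambda$); (ii) $T\le S(T)$ and $S(Y)=Y$; (iii) $Y_\lambda(\pi)\in\mathcal{D}_\lambda(\pi)$ and $\mathcal{D}_\lambda(\pi)\subseteq[Y_\lambda(\pi)]$; (iv) $Y_\lambda(\pi)$ is the unique maximal element of $\mathcal{D}_\lambda(\pi)$; (v) the sets $\mathcal{D}_\lambda(\sigma)$, $\sigma$ ranging over the $R_\lambda$-permutations, are nonempty subsets of $\mathcal{T}_\lambda$ and are pairwise distinct.
   Context: Fix $n\ge1$; $[m]=\{1,\dots,m\}$. A partition is $\lambda=(\lambda_1\ge\cdots\ge\lambda_n\ge0)\in\mathbb{Z}^n$, with boxes $(j,i)$ (column $j$, row $i$), $1\le j\le\lambda_1$, $1\le i\le\zeta_j:=\#\{i:\lambda_i\ge j\}$; $R_\lambda:=\{\zeta_j:\zeta_j<n\}$ with elements $q_1<\dots<q_r$, $q_0:=0$, $q_{r+1}:=n$. An $R_\lambda$-permutation is a permutation $\pi$ of $[n]$ in one-line notation that is strictly increasing on each index set $\{q_{h-1}+1,\dots,q_h\}$. A tableau of shape $\lambda$ fills the boxes with values in $[n]$, strictly increasing down columns and weakly increasing along rows; $\mathcal{T}_\lambda$ is their set, ordered entrywise, and $[U]:=\{T\in\mathcal{T}_\lambda:T\le U\}$. $T_j(i)$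 is the entry at column $j$ row $i$; $B(T_j)$ the set of entries of column $j$. A $\lambda$-key is $Y\in\mathcal{T}_\lambda$ with $B(Y_l)\supseteq B(Y_j)$ for $l\le j$. The $\lambda$-key $Y_\lambda(\pi)$ is the tableau whose column $j$ consists of $\{\pi_1,\dots,\pi_{\zeta_j}\}$ in increasing order. Scanning tableau: the earliest weakly increasing subsequence (EWIS) of a sequence $x_1,x_2,\dots$ is $x_{i_1},x_{i_2},\dots$ with $i_1=1$ and $i_u$ the smallest index $>i_{u-1}$ with $x_{i_u}\ge x_{i_{u-1}}$. For $T\in\mathcal{T}_\lambda$ and $l\in[\lambda_1]$, column $l$ of $S(T)$ is computed as follows: consider the boxes of $T$ in columns $l,l+1,\dots,\lambda_1$, all initially unmarked; for $k=\zeta_l,\zeta_l-1,\dots,1$ in turn, form the sequence of the lowest unmarked entries of the columns $l,l+1,\dots$ (from left to right, over the columns still having unmarked boxes; the unmarked boxes always form a partition shape), take its EWIS, mark the boxes contributing to it (this set of boxes is the scanning path $\mathcal{P}(T;l,k)$), and set the entry of $S(T)$ at column $l$, row $k$ to be the last term of this EWIS. The set of Demazure tableaux is $\mathcal{D}_\lambda(\pi):=\{T\in\mathcal{T}_\lambda: S(T)\le Y_\lambda(\pi)\}$. *)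

(* Defs.v *)
From mathcomp Require Import all_boot.
Set Implicit Arguments. Unset Strict Implicit. Unset Printing Implicit Defensive.

(* Conventions: a partition lambda is a seq nat of size n (lambda_1 = nth 0 lambda 0).
   A tableau is a seq of columns (left to right); each column is a seq nat listing the
   entries from top (row 1) to bottom.  Internally columns and rows are 0-indexed:
   column c here is column c+1 of the paper, position i of a column is row i+1. *)

Definition is_partition (n : nat) (lam : seq nat) : bool :=
  (size lam == n) && sorted geq lam.

Definition ncols (lam : seq nat) : nat := head 0 lam.

(* zeta_{c+1} = #{ i : lambda_i >= c+1 } *)
Definition zeta (lam : seq nat) (c : nat) : nat := count (fun x => c < x) lam.

Definition entry (T : seq (seq nat)) (c i : nat) : nat := nth 0 (nth [::] T c) i.

Definition is_tab (n : nat) (lam : seq nat) (T : seq (seq nat)) : bool :=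
  [&& size T == ncols lam,
      all (fun c => size (nth [::] T c) == zeta lam c) (iota 0 (ncols lam)),
      all (fun col => all (fun x => (1 <= x) && (x <= n)) col) T,
      all (fun col => sorted ltn col) T &
      all (fun c => all (fun i => entry T c i <= entry T c.+1 i) (iota 0 (zeta lam c.+1)))
          (iota 0 (ncols lam).-1)].

Definition tab_le (T U : seq (seq nat)) : bool := all2 (fun a b => all2 leq a b) T U.

Definition is_key (n : nat) (lam : seq nat) (Y : seq (seq nat)) : bool :=
  is_tab n lam Y &&
  all (fun j => all (fun l => (l <= j) ==> all (fun x => x \in nth [::] Y l) (nth [::] Y j))
                    (iota 0 (ncols lam)))
      (iota 0 (ncols lam)).

Definition Rset (n : nat) (lam : seq nat) : seq nat :=
  [seq zeta lam c | c <- iota 0 (ncols lam) & zeta lam c < n].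

Definition qseq (n : nat) (lam : seq nat) : seq nat :=
  0 :: rcons (sort leq (undup (Rset n lam))) n.

(* pi (one-line notation, pi_a = nth 0 pi a.-1) is a permutation of [n] strictly
   increasing on each block {q_{h-1}+1, ..., q_h} *)
Definition is_Rperm (n : nat) (lam : seq nat) (pi : seq nat) : Prop :=
  perm_eq pi (iota 1 n) /\
  forall h, h.+1 < size (qseq n lam) ->
    forall a b, nth 0 (qseq n lam) h < a -> a < b -> b <= nth 0 (qseq n lam) h.+1 ->
      nth 0 pi a.-1 < nth 0 pi b.-1.

Definition Ykey (lam : seq nat) (pi : seq nat) : seq (seq nat) :=
  mkseq (fun c => sort leq (take (zeta lam c) pi)) (ncols lam).

Fixpoint ewis_from (last : nat) (s : seq (nat * nat)) : seq (nat * nat) :=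
  match s with
  | [::] => [::]
  | x :: s' => if last <= x.2 then x :: ewis_from x.2 s' else ewis_from last s'
  end.

Definition ewis (s : seq (nat * nat)) : seq (nat * nat) :=
  match s with
  | [::] => [::]
  | x :: s' => x :: ewis_from x.2 s'
  end.

(* cols : the columns l, l+1, ... of T; hs : numbers of unmarked boxes of each column
   (the unmarked boxes of a column are its top hs_c boxes). *)
Definition lowest (cols : seq (seq nat)) (hs : seq nat) : seq (nat * nat) :=
  [seq (c, nth 0 (nth [::] cols c) (nth 0 hs c).-1) | c <- iota 0 (size cols) & 0 < nth 0 hs c].

Definition scan_path (cols : seq (seq nat)) (hs : seq nat) : seq (nat * nat) :=
  ewis (lowest cols hs).

Definition mark (cols : seq (seq nat)) (hs : seq nat) : seq nat :=
  [seq (if c \in map fst (scan_path cols hs) then (nth 0 hs c).-1 else nth 0 hs c)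
  | c <- iota 0 (size cols)].

Fixpoint scan_iter (k : nat) (cols : seq (seq nat)) (hs : seq nat) : seq nat :=
  match k with
  | 0 => [::]
  | k'.+1 => last 0 (map snd (scan_path cols hs)) :: scan_iter k' cols (mark cols hs)
  end.

(* column l of S(T): the scans are for k = zeta_l, ..., 1, so reverse to list rows 1..zeta_l *)
Definition scan_col (T : seq (seq nat)) (l : nat) : seq nat :=
  let cols := drop l T in
  rev (scan_iter (size (nth [::] T l)) cols (map size cols)).

Definition scan (T : seq (seq nat)) : seq (seq nat) := mkseq (scan_col T) (size T).

Definition in_D (n : nat) (lam : seq nat) (pi : seq nat) (T : seq (seq nat)) : bool :=
  is_tab n lam T && tab_le (scan T) (Ykey lam pi).

Definition in_ideal (n : nat) (lam : seq nat) (U T : seq (seq nat)) : bool :=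
  is_tab n lam T && tab_le T U.

(* Main.v *)
Require Import Defs.
From mathcomp Require Import all_boot zify.
Set Implicit Arguments. Unset Strict Implicit. Unset Printing Implicit Defensive.


Fixpoint gstep (o D : seq nat) (h : nat) : seq nat :=
  match o with
  | [::] => [::]
  | x :: o' => if (0 < h) && (x <= nth 0 D h.-1) then nth 0 D h.-1 :: gstep o' D h.-1
               else x :: gstep o' D h
  end.

Lemma ewis_from_rcons t s x : ewis_from t (rcons s x) =
  if last t (map snd (ewis_from t s)) <= x.2 then rcons (ewis_from t s) x else ewis_from t s.
Proof.
elim: s t => [|y s IH] t /=; first by [].
case: ifP => _ //=; rewrite IH //=; by case: ifP.
Qed.

Lemma ewisE s : ewis s = ewis_from 0 s.
Proof. by case: s. Qed.

Lemma mem_ewis_from t s y : y \in ewis_from t s -> y \in s.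
Proof.
elim: s t => [|z s IH] t //=; case: ifP => _.
  by rewrite !inE => /orP[->//|/IH ->]; rewrite orbT.
by move/IH; rewrite inE => ->; rewrite orbT.
Qed.

Lemma lowest_rcons cols hs D h : size hs = size cols ->
  lowest (rcons cols D) (rcons hs h) =
  lowest cols hs ++ (if 0 < h then [:: (size cols, nth 0 D h.-1)] else [::]).
Proof.
move=> Hs; rewrite /lowest size_rcons.
have ->: iota 0 (size cols).+1 = iota 0 (size cols) ++ [:: size cols] by rewrite -addn1 iotaD.
rewrite filter_cat map_cat /=.
congr (_ ++ _).
  rewrite (@eq_in_filter _ _ (fun c => 0 < nth 0 hs c)); last first.
    by move=> c; rewrite mem_iota /= => Hc; rewrite nth_rcons Hs Hc.
  apply/eq_in_map => c; rewrite mem_filter mem_iota /= => /andP[_ Hc].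
  by rewrite !nth_rcons Hs Hc.
have E1: nth 0 (rcons hs h) (size cols) = h by rewrite nth_rcons Hs ltnn eqxx.
have E2: nth [::] (rcons cols D) (size cols) = D by rewrite nth_rcons ltnn eqxx.
by rewrite E1; case: ifP => //= _; rewrite E1 E2.
Qed.

Lemma scan_path_rcons cols hs D h : size hs = size cols ->
  scan_path (rcons cols D) (rcons hs h) =
  if (0 < h) && (last 0 (map snd (scan_path cols hs)) <= nth 0 D h.-1)
  then rcons (scan_path cols hs) (size cols, nth 0 D h.-1) else scan_path cols hs.
Proof.
move=> Hs; rewrite /scan_path lowest_rcons //.
case: h => [|h] /=; first by rewrite cats0.
by rewrite cats1 !ewisE ewis_from_rcons.
Qed.

Lemma scan_path_fst cols hs c : c \in map fst (scan_path cols hs) -> c < size cols.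
Proof.
case/mapP=> [[c' v]] Hin /= ->; move: Hin; rewrite /scan_path ewisE => /mem_ewis_from.
by case/mapP=> c'' ; rewrite mem_filter mem_iota /= add0n => /andP[_ Hc] [-> _].
Qed.

Lemma size_mark cols hs : size (mark cols hs) = size cols.
Proof. by rewrite /mark size_map size_iota. Qed.


Lemma mark_rcons cols hs D h : size hs = size cols ->
  mark (rcons cols D) (rcons hs h) =
  rcons (mark cols hs)
    (if (0 < h) && (last 0 (map snd (scan_path cols hs)) <= nth 0 D h.-1) then h.-1 else h).
Proof.
move=> Hs; rewrite /mark scan_path_rcons // size_rcons.
have ->: iota 0 (size cols).+1 = iota 0 (size cols) ++ [:: size cols] by rewrite -addn1 iotaD.
rewrite map_cat /= cats1.
have E1: nth 0 (rcons hs h) (size cols) = h by rewrite nth_rcons Hs ltnn eqxx.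
rewrite E1.
have Hm: forall c, c < size cols -> nth 0 (rcons hs h) c = nth 0 hs c.
  by move=> c Hc; rewrite nth_rcons Hs Hc.
case: ifP => H.
  rewrite map_rcons mem_rcons inE eqxx /=; congr rcons.
  apply/eq_in_map => c; rewrite mem_iota /= => Hc.
  by rewrite Hm // mem_rcons inE (ltn_eqF Hc).
congr rcons.
  by apply/eq_in_map => c; rewrite mem_iota /= => Hc; rewrite Hm.
case: (boolP (size cols \in _)) => // /scan_path_fst; by rewrite ltnn.
Qed.

Lemma scan_iter_rcons k cols hs D h : size hs = size cols ->
  scan_iter k (rcons cols D) (rcons hs h) = gstep (scan_iter k cols hs) D h.
Proof.
elim: k hs h => [|k IH] hs h Hs //=.
rewrite mark_rcons // IH ?size_mark ?Hs // scan_path_rcons //.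
case: ifP => H //=.
by rewrite map_rcons last_rcons.
Qed.

Definition gfold (o : seq nat) (cs : seq (seq nat)) :=
  foldl (fun o D => gstep o D (size D)) o cs.

Lemma scan_iter_nil k : scan_iter k [::] [::] = nseq k 0.
Proof. by elim: k => //= k ->. Qed.

Lemma scan_iter_fold k cols :
  scan_iter k cols (map size cols) = gfold (nseq k 0) cols.
Proof.
elim/last_ind: cols => [|cols D IH]; first exact: scan_iter_nil.
by rewrite map_rcons scan_iter_rcons ?size_map // IH /gfold foldl_rcons.
Qed.

Fixpoint gfin (o D : seq nat) (h : nat) : nat :=
  match o with
  | [::] => h
  | x :: o' => if (0 < h) && (x <= nth 0 D h.-1) then gfin o' D h.-1 else gfin o' D h
  end.

Lemma size_gstep o D h : size (gstep o D h) = size o.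
Proof. by elim: o h => //= x o IH h; case: ifP => _ /=; rewrite IH. Qed.

Lemma mem_gstep o D h y : y \in gstep o D h ->
  y \in o \/ exists2 i, i < h & y = nth 0 D i.
Proof.
elim: o h => //= x o IH h; case: ifP => [/andP[h0 _]|_]; rewrite inE => /orP[/eqP->|/IH].
- by right; exists h.-1; rewrite // prednK.
- case=> [Hy|[i Hi ->]]; first by left; rewrite inE Hy orbT.
  by right; exists i => //; apply: leq_trans Hi _; apply: leq_pred.
- by left; rewrite inE eqxx.
- case=> [Hy|[i Hi ->]]; first by left; rewrite inE Hy orbT.
  by right; exists i.
Qed.

Lemma gtn_tr : transitive gtn.
Proof. by move=> a b c H1 H2; apply: ltn_trans H1. Qed.

Lemma sorted_gtn_cons x o : sorted gtn (x :: o) -> (forall y, y \in o -> y < x) /\ sorted gtn o.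
Proof.
rewrite /= (path_sortedE gtn_tr) => /andP[/allP H ->]; split=> // y /H //.
Qed.

Lemma sorted_ltn_nthE D i j : sorted ltn D -> i < j -> j < size D -> nth 0 D i < nth 0 D j.
Proof.
move=> HD Hij Hj; apply: (sorted_ltn_nth ltn_trans) => //; rewrite inE //.
by apply: ltn_trans Hij Hj.
Qed.

Lemma sorted_gstep o D h : sorted gtn o -> sorted ltn D -> h <= size D ->
  sorted gtn (gstep o D h).
Proof.
elim: o h => //= x o IH h Ho HD Hh.
have [Hx Ho'] := sorted_gtn_cons Ho.
case: ifP => [/andP[h0 xd]|Hc]; rewrite /= (path_sortedE gtn_tr).
  apply/andP; split; last by apply: IH => //; apply: leq_trans (leq_pred _) Hh.
  apply/allP => y /mem_gstep [/Hx yx|[i Hi ->]].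
    exact: (leq_trans yx xd).
  by apply: sorted_ltn_nthE => //; rewrite prednK.
apply/andP; split; last exact: IH.
apply/allP => y /mem_gstep [/Hx //|[i Hi ->]].
move/negbT: Hc; rewrite negb_and -!ltnNge; case/orP.
  by move=> H0; move: Hi H0; case: (h).
move=> Hd; rewrite /=; apply: leq_ltn_trans Hd.
have h0 : 0 < h by case: (h) Hi.
case: (ltngtP i h.-1) => [Hl|Hl|->] //.
- by apply: ltnW; apply: sorted_ltn_nthE => //; rewrite prednK.
- by move: Hl; rewrite prednK // => /(leq_trans Hi); rewrite ltnn.
Qed.

Lemma gfin0 o D : gfin o D 0 = 0.
Proof. by elim: o. Qed.

Lemma count_all_le (P : pred nat) s : all P s -> count P s = size s.
Proof. by move=> H; apply/eqP; rewrite -all_count. Qed.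

Lemma gfin_hall o D h : sorted gtn o -> sorted ltn D -> h <= size D ->
  (forall i, i < h -> i < count (fun x => x <= nth 0 D i) o) -> gfin o D h = 0.
Proof.
elim: o h => [|x o IH] h Ho HD Hh Hall /=.
  by case: h Hh Hall => // h _ /(_ 0 isT).
have [Hx Ho'] := sorted_gtn_cons Ho.
case: h Hh Hall => [|h] Hh Hall; first by rewrite gfin0.
case: ifP => /= [xd|xd].
  apply: IH => //; first by apply: ltnW.
  move=> i Hi; have := Hall i (leqW Hi) => /=.
  case: (leqP x (nth 0 D i)) => xi /=.
    have Es : count (fun y => y <= nth 0 D i) o = size o.
      by apply: count_all_le; apply/allP => y /Hx yx; apply: leq_trans (ltnW yx) xi.
    rewrite Es => _; have := Hall h (ltnSn h); rewrite /= xd.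
    by rewrite add1n ltnS => H; apply: leq_trans Hi (leq_trans H (count_size _ _)).
  by rewrite add0n.
apply: IH => // i Hi; have := Hall i Hi => /=.
have : nth 0 D i < x.
  move/negbT: xd; rewrite -ltnNge => xd; apply: leq_ltn_trans xd.
  case: (ltngtP i h) => [Hl|Hl|->] //.
  - by apply: ltnW; apply: sorted_ltn_nthE.
  - by move: Hi; rewrite ltnS leqNgt Hl.
by rewrite ltnNge => /negbTE ->.
Qed.

Lemma gstep_contains o D h : gfin o D h = 0 -> forall i, i < h -> nth 0 D i \in gstep o D h.
Proof.
elim: o h => [|x o IH] h /=; first by move=> -> .
case: ifP => [/andP[h0 _]|_] H i Hi; rewrite inE.
  case: (ltngtP i h.-1) => [Hl|Hl|->]; last by rewrite eqxx.
  - by rewrite IH ?orbT.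
  - by move: Hl; rewrite prednK // => /(leq_trans Hi); rewrite ltnn.
by rewrite IH ?orbT.
Qed.

Lemma gstep_mono X Y D h : sorted gtn X -> sorted gtn Y -> {subset Y <= X} ->
  {subset gstep Y D h <= gstep X D h}.
Proof.
elim: X Y h => [|x X IH] [|y Y] h HX HY Hsub //=.
  by have := Hsub y; rewrite inE eqxx => /(_ isT).
have [Hx HX'] := sorted_gtn_cons HX.
have [Hy HY'] := sorted_gtn_cons HY.
have yX : y \in x :: X by apply: Hsub; rewrite inE eqxx.
have yx : y <= x by move: yX; rewrite inE => /orP[/eqP->//|/Hx/ltnW].
case: (ltngtP y x) yx => [ltyx|//|eyx] _.
  have HsubX : {subset y :: Y <= X}.
    move=> z; rewrite inE => /orP[/eqP->|Hz].
      by move: yX; rewrite inE (ltn_eqF ltyx).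
    have zX : z \in x :: X by apply: Hsub; rewrite inE Hz orbT.
    move: zX; rewrite inE => /orP[/eqP Ez|//].
    by have := ltn_trans (Hy z Hz) ltyx; rewrite Ez ltnn.
  case Ex: ((0 < h) && (x <= nth 0 D h.-1)).
    move/andP: Ex => [h0 xd].
    have yd : y <= nth 0 D h.-1 by apply: leq_trans (ltnW ltyx) xd.
    rewrite h0 yd /= => z; rewrite !inE => /orP[->//|Hz].
    apply/orP; right; apply: (IH Y) => //.
    by move=> w Hw; apply: HsubX; rewrite inE Hw orbT.
  move=> z Hz; rewrite inE; apply/orP; right.
  by apply: (IH (y :: Y)) => //.
subst y.
have HsubX : {subset Y <= X}.
  move=> z Hz; have : z \in x :: X by apply: Hsub; rewrite inE Hz orbT.
  rewrite inE => /orP[/eqP Ez|//].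
  by have := Hy z Hz; rewrite Ez ltnn.
case: ifP => _ z; rewrite !inE => /orP[->//|Hz]; by rewrite (IH Y) ?orbT.
Qed.

Lemma gstep_pos o D h i : nth 0 o i <= nth 0 (gstep o D h) i.
Proof.
elim: o h i => [|x o IH] h i /=; first by rewrite nth_nil.
case: ifP => [/andP[_ xd]|_]; case: i => [|i] //=.
Qed.

Lemma size_gfold o cs : size (gfold o cs) = size o.
Proof. by elim: cs o => //= D cs IH o; rewrite IH size_gstep. Qed.

Lemma mem_gfold o cs y : y \in gfold o cs -> y \in o \/ exists2 D, D \in cs & y \in D.
Proof.
elim: cs o => [|D cs IH] o /=; first by left.
move/IH => [/mem_gstep [H|[i Hi ->]]|[D' HD' HyD']].
- by left.
- by right; exists D; rewrite ?inE ?eqxx //; apply: mem_nth.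
- by right; exists D' => //; rewrite inE HD' orbT.
Qed.

Lemma sorted_gfold o cs : sorted gtn o -> all (sorted ltn) cs -> sorted gtn (gfold o cs).
Proof.
elim: cs o => //= D cs IH o Ho /andP[HD Hcs]; apply: IH => //.
exact: sorted_gstep.
Qed.

Lemma gfold_pos o cs i : nth 0 o i <= nth 0 (gfold o cs) i.
Proof.
elim: cs o => //= D cs IH o; apply: leq_trans (IH _); exact: gstep_pos.
Qed.

Lemma gfold_mono X Y cs : sorted gtn X -> sorted gtn Y -> {subset Y <= X} ->
  all (sorted ltn) cs -> {subset gfold Y cs <= gfold X cs}.
Proof.
elim: cs X Y => //= D cs IH X Y HX HY Hsub /andP[HD Hcs].
apply: IH => //; try exact: sorted_gstep.
exact: gstep_mono.
Qed.

Lemma count_uniq_sub (P : pred nat) A B : uniq A -> {subset A <= B} -> count P A <= count P B.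
Proof.
move=> uA sAB; rewrite -!size_filter; apply: uniq_leq_size; first exact: filter_uniq.
by move=> x; rewrite !mem_filter => /andP[-> /sAB].
Qed.

Lemma sorted_ltn_cons x s : sorted ltn (x :: s) -> (forall y, y \in s -> x < y) /\ sorted ltn s.
Proof. by rewrite /= (path_sortedE ltn_trans) => /andP[/allP H ->]. Qed.

Lemma count_le_nth s i : sorted ltn s -> i < size s -> i < count (fun x => x <= nth 0 s i) s.
Proof.
elim: s i => //= x s IH [|i] Hs Hi /=; first by rewrite leqnn.
have [Hx Hs'] := sorted_ltn_cons Hs.
have Hm : nth 0 s i \in s by apply: mem_nth.
by rewrite (ltnW (Hx _ Hm)) add1n ltnS; apply: IH.
Qed.

Lemma nth_le_of_count s v i : sorted ltn s -> i < count (fun x => x <= v) s -> nth 0 s i <= v.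
Proof.
elim: s i => //= x s IH i Hs.
have [Hx Hs'] := sorted_ltn_cons Hs.
case: (leqP x v) => xv.
  by case: i => [|i] //=; rewrite add1n ltnS; apply: IH.
have -> : count (fun x => x <= v) s = 0.
  apply/eqP; rewrite -leqn0 leqNgt -has_count; apply/hasPn => y /Hx xy.
  by rewrite -ltnNge; apply: ltn_trans xy.
by [].
Qed.

Lemma sub_nth_le A B i : sorted ltn A -> sorted ltn B -> {subset A <= B} -> i < size A ->
  nth 0 B i <= nth 0 A i.
Proof.
move=> HA HB sAB Hi; apply: nth_le_of_count => //.
apply: leq_trans (count_le_nth HA Hi) _.
apply: count_uniq_sub => //; exact: (sorted_uniq ltn_trans ltnn).
Qed.

Definition rowle (A B : seq nat) : bool :=
  (size B <= size A) && all (fun i => nth 0 A i <= nth 0 B i) (iota 0 (size B)).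

Lemma gstep_contains_all o D0 D : sorted gtn o -> sorted ltn D0 -> sorted ltn D ->
  {subset D0 <= o} -> rowle D0 D -> {subset D <= gstep o D (size D)}.
Proof.
move=> Ho HD0 HD sub /andP[Hsz /allP Hr].
have H0 : gfin o D (size D) = 0.
  apply: gfin_hall => // i Hi.
  have HiD0 : i < size D0 by apply: leq_trans Hsz.
  apply: leq_trans (count_le_nth HD0 HiD0) _.
  apply: leq_trans (count_uniq_sub _ (sorted_uniq ltn_trans ltnn HD0) sub).
  apply: sub_count => x /= Hx; apply: leq_trans Hx _.
  by apply: Hr; rewrite mem_iota.
move=> y Hy; rewrite -(nth_index 0 Hy); apply: gstep_contains => //.
by rewrite index_mem.
Qed.

Lemma gfold_last o D0 cs : sorted gtn o -> sorted ltn D0 -> {subset D0 <= o} ->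
  all (sorted ltn) cs -> path rowle D0 cs -> {subset last D0 cs <= gfold o cs}.
Proof.
elim: cs o D0 => //= D cs IH o D0 Ho HD0 sub /andP[HD Hcs] /andP[Hr Hp].
apply: IH => //; first exact: sorted_gstep.
exact: (gstep_contains_all Ho HD0 HD sub Hr).
Qed.

Lemma gstep_nseq C h : h <= size C -> gstep (nseq h 0) C h = rev (take h C).
Proof.
elim: h => [|h IH] Hh /=; first by rewrite take0.
by rewrite IH ?(ltnW Hh) // (take_nth 0 Hh) rev_rcons.
Qed.

Definition O (T : seq (seq nat)) l := gfold (rev (nth [::] T l)) (drop l.+1 T).

Lemma rev_ltn_gtn C : sorted ltn C -> sorted gtn (rev C).
Proof. by move=> H; rewrite rev_sorted. Qed.

Lemma rev_gtn_ltn C : sorted gtn C -> sorted ltn (rev C).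
Proof. by move=> H; rewrite rev_sorted. Qed.

Lemma scan_colE T l : l < size T -> scan_col T l = rev (O T l).
Proof.
move=> Hl; rewrite /scan_col scan_iter_fold (drop_nth [::] Hl) /= gstep_nseq //.
by rewrite take_size.
Qed.

Lemma size_scan T : size (scan T) = size T.
Proof. by rewrite size_mkseq. Qed.

Lemma nth_scan T l : l < size T -> nth [::] (scan T) l = rev (O T l).
Proof. by move=> Hl; rewrite nth_mkseq // scan_colE. Qed.

Lemma zeta_anti lam c c' : c <= c' -> zeta lam c' <= zeta lam c.
Proof. by move=> H; apply: sub_count => x /= Hx; apply: leq_ltn_trans Hx. Qed.

Section Tab.
Variables (n : nat) (lam : seq nat) (T : seq (seq nat)).
Hypothesis HT : is_tab n lam T.

Lemma tab_size : size T = ncols lam.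
Proof. by case/and5P: HT => /eqP. Qed.

Lemma tab_colsize c : c < size T -> size (nth [::] T c) = zeta lam c.
Proof.
case/and5P: HT => /eqP Hs /allP H _ _ _ Hc; apply/eqP; apply: H.
by rewrite mem_iota -Hs.
Qed.

Lemma tab_bound c x : x \in nth [::] T c -> 0 < x <= n.
Proof.
case/and5P: HT => _ _ /allP H _ _.
case: (ltnP c (size T)) => Hc; last by rewrite nth_default.
by move/(allP (H _ (mem_nth [::] Hc))).
Qed.

Lemma tab_sorted c : sorted ltn (nth [::] T c).
Proof.
case/and5P: HT => _ _ _ /allP H _.
case: (ltnP c (size T)) => Hc; last by rewrite nth_default.
exact: (H _ (mem_nth [::] Hc)).
Qed.

Lemma tab_all_sorted : all (sorted ltn) T.
Proof. by case/and5P: HT. Qed.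

Lemma tab_row c : c.+1 < size T -> rowle (nth [::] T c) (nth [::] T c.+1).
Proof.
move=> Hc; case/and5P: HT => /eqP Hs _ _ _ /allP H.
rewrite /rowle !tab_colsize ?(ltnW Hc) // zeta_anti ?leqnSn //=.
apply/allP => i Hi; have := H c; rewrite mem_iota -Hs add0n.
have -> : c < (size T).-1 by rewrite -ltnS prednK //; apply: leq_ltn_trans Hc.
by move/(_ isT)/allP/(_ i Hi).
Qed.

Lemma O_sorted l : sorted gtn (O T l).
Proof.
apply: sorted_gfold; first by apply: rev_ltn_gtn; apply: tab_sorted.
by apply/allP => D /mem_drop; apply: (allP tab_all_sorted).
Qed.

Lemma O_size l : size (O T l) = size (nth [::] T l).
Proof. by rewrite size_gfold size_rev. Qed.

Lemma O_mem l y : y \in O T l -> exists c, [/\ l <= c, c < size T & y \in nth [::] T c].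
Proof.
case/mem_gfold => [|[D HD Hy]].
  rewrite mem_rev => Hy; exists l; split => //.
  by case: (ltnP l (size T)) => Hl //; move: Hy; rewrite nth_default.
move: HD => /(nthP [::]) [k Hk Ek]; rewrite size_drop in Hk.
exists (l.+1 + k); split; first by lia.
- by move: Hk; rewrite ltn_subRL.
- by rewrite -nth_drop Ek.
Qed.

Lemma O_pos l i : i < size (nth [::] T l) -> nth 0 (nth [::] T l) i <= nth 0 (rev (O T l)) i.
Proof.
move=> Hi; rewrite nth_rev O_size //.
have := gfold_pos (rev (nth [::] T l)) (drop l.+1 T) (size (nth [::] T l) - i.+1).
rewrite nth_rev ?size_rev; last by lia.
by have -> : size (nth [::] T l) - (size (nth [::] T l) - i.+1).+1 = i by lia.
Qed.

Lemma O_incl l : l.+1 < size T -> {subset O T l.+1 <= O T l}.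
Proof.
move=> Hl; rewrite /O (drop_nth [::] Hl) /=.
apply: gfold_mono.
- apply: sorted_gstep; [apply: rev_ltn_gtn; apply: tab_sorted | apply: tab_sorted | by []].
- by apply: rev_ltn_gtn; apply: tab_sorted.
- move=> y; rewrite mem_rev; apply: (gstep_contains_all (D0 := nth [::] T l)).
  + by apply: rev_ltn_gtn; apply: tab_sorted.
  + exact: tab_sorted.
  + exact: tab_sorted.
  + by move=> z; rewrite mem_rev.
  + exact: tab_row.
- by apply/allP => D /mem_drop; apply: (allP tab_all_sorted).
Qed.

Lemma scan_incl l j : l <= j -> j < size T ->
  {subset nth [::] (scan T) j <= nth [::] (scan T) l}.
Proof.
move=> Hlj; have [d ->] : exists d, j = l + d by exists (j - l); rewrite subnKC.
clear Hlj; elim: d => [|d IH] Hd; first by rewrite addn0.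
rewrite addnS in Hd *; move=> y Hy; apply: IH; first by apply: ltnW.
move: Hy; rewrite !nth_scan ?(ltnW Hd) // !mem_rev; exact: O_incl.
Qed.

End Tab.

Lemma all2_nth (r : nat -> nat -> bool) s t : size s = size t ->
  (forall i, i < size s -> r (nth 0 s i) (nth 0 t i)) -> all2 r s t.
Proof.
elim: s t => [|x s IH] [|y t] //= [Hs] H; apply/andP; split; first exact: (H 0).
by apply: IH => // i Hi; apply: (H i.+1).
Qed.

Lemma all2_nth2 (r : seq nat -> seq nat -> bool) s t : size s = size t ->
  (forall i, i < size s -> r (nth [::] s i) (nth [::] t i)) -> all2 r s t.
Proof.
elim: s t => [|x s IH] [|y t] //= [Hs] H; apply/andP; split; first exact: (H 0).
by apply: IH => // i Hi; apply: (H i.+1).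
Qed.

Lemma scan_is_key n lam T : is_tab n lam T -> is_key n lam (scan T).
Proof.
move=> HT; have Hs := tab_size HT.
have Htab : is_tab n lam (scan T).
  apply/and5P; split.
  - by rewrite size_scan Hs.
  - apply/allP => c; rewrite mem_iota add0n -Hs => Hc.
    by rewrite nth_scan // size_rev O_size (tab_colsize HT).
  - apply/allP => col /(nthP [::]) [c Hc <-]; rewrite size_scan in Hc.
    rewrite nth_scan //; apply/allP => y; rewrite mem_rev => /(O_mem HT) [c' [_ _ Hy]].
    exact: (tab_bound HT Hy).
  - apply/allP => col /(nthP [::]) [c Hc <-]; rewrite size_scan in Hc.
    by rewrite nth_scan //; apply: rev_gtn_ltn; apply: (O_sorted HT).
  - apply/allP => c; rewrite mem_iota add0n -Hs => /andP[_ Hc]; apply/allP => i; rewrite mem_iota add0n => /andP[_ Hi].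
    have Hc1 : c.+1 < size T by case: (size T) Hc.
    rewrite /entry; apply: sub_nth_le.
    + by rewrite nth_scan //; apply: rev_gtn_ltn; apply: (O_sorted HT).
    + by rewrite nth_scan ?(ltnW Hc1) //; apply: rev_gtn_ltn; apply: (O_sorted HT).
    + by apply: (scan_incl HT) => //.
    + by rewrite nth_scan // size_rev O_size (tab_colsize HT).
rewrite /is_key Htab /=; apply/allP => j; rewrite mem_iota add0n -Hs => Hj.
apply/allP => l _; apply/implyP => Hlj; apply/allP => x; exact: (scan_incl HT).
Qed.

Lemma scan_ge n lam T : is_tab n lam T -> tab_le T (scan T).
Proof.
move=> HT; apply: all2_nth2; first by rewrite size_scan.
move=> c Hc; rewrite nth_scan //; apply: all2_nth; first by rewrite size_rev O_size.
by move=> i Hi; apply: (O_pos HT).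
Qed.

Lemma key_nest n lam Y l j x : is_key n lam Y -> l <= j -> j < size Y ->
  x \in nth [::] Y j -> x \in nth [::] Y l.
Proof.
case/andP=> HY /allP H Hlj Hj; have Hs := tab_size HY.
have Hj' : j \in iota 0 (ncols lam) by rewrite mem_iota add0n -Hs Hj.
have Hl' : l \in iota 0 (ncols lam) by rewrite mem_iota add0n -Hs (leq_ltn_trans Hlj Hj).
by move: (H j Hj') => /allP /(_ l Hl'); rewrite Hlj => /allP; apply.
Qed.

Lemma scan_key_fix n lam Y : is_key n lam Y -> scan Y = Y.
Proof.
move=> HK; have HY : is_tab n lam Y by case/andP: HK.
apply: (@eq_from_nth _ [::]); first by rewrite size_scan.
move=> c; rewrite size_scan => Hc; rewrite nth_scan //.
apply: (irr_sorted_eq ltn_trans ltnn).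
- by apply: rev_gtn_ltn; apply: (O_sorted HY).
- exact: (tab_sorted HY c).
have Hu : uniq (rev (O Y c)).
  by rewrite rev_uniq; apply: (sorted_uniq gtn_tr) (O_sorted HY c) => x; rewrite /= ltnn.
have Hsub : {subset rev (O Y c) <= nth [::] Y c}.
  move=> y; rewrite mem_rev => /(O_mem HY) [c' [Hcc' Hc' Hy]].
  exact: (key_nest HK Hcc' Hc' Hy).
have Hsz : size (nth [::] Y c) <= size (rev (O Y c)) by rewrite size_rev O_size.
by have [_ E] := uniq_min_size Hu Hsub Hsz.
Qed.

Lemma le2_trans (s t u : seq nat) : all2 leq s t -> all2 leq t u -> all2 leq s u.
Proof.
elim: s t u => [|x s IH] [|y t] [|z u] //= /andP[xy st] /andP[yz tu].
by rewrite (leq_trans xy yz) (IH t).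
Qed.

Lemma le2_anti (s t : seq nat) : all2 leq s t -> all2 leq t s -> s = t.
Proof.
elim: s t => [|x s IH] [|y t] //= /andP[xy st] /andP[yx ts].
by rewrite (IH t) // (@anti_leq x y) ?xy ?yx.
Qed.

Lemma le2_refl (s : seq nat) : all2 leq s s.
Proof. by elim: s => //= x s ->; rewrite leqnn. Qed.

Lemma tab_le_trans T U V : tab_le T U -> tab_le U V -> tab_le T V.
Proof.
rewrite /tab_le; elim: T U V => [|x s IH] [|y t] [|z u] //= /andP[xy st] /andP[yz tu].
by rewrite (le2_trans xy yz) (IH t).
Qed.

Lemma tab_le_anti T U : tab_le T U -> tab_le U T -> T = U.
Proof.
rewrite /tab_le; elim: T U => [|x s IH] [|y t] //= /andP[xy st] /andP[yx ts].
by rewrite (IH t) // (le2_anti xy yx).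
Qed.

Lemma tab_le_refl T : tab_le T T.
Proof. by rewrite /tab_le; elim: T => //= x s ->; rewrite le2_refl. Qed.

Section Key.
Variables (n : nat) (lam : seq nat) (pi : seq nat).
Hypothesis Hlam : size lam = n.
Hypothesis Hpi : perm_eq pi (iota 1 n).

Let Yc c := sort leq (take (zeta lam c) pi).

Lemma size_pi : size pi = n.
Proof. by rewrite (perm_size Hpi) size_iota. Qed.

Lemma zeta_le c : zeta lam c <= n.
Proof. by rewrite -Hlam; apply: count_size. Qed.

Lemma Yc_sorted c : sorted ltn (Yc c).
Proof.
rewrite ltn_sorted_uniq_leq sort_uniq take_uniq ?(perm_uniq Hpi) ?iota_uniq //.
exact: (sort_sorted leq_total).
Qed.

Lemma Yc_size c : size (Yc c) = zeta lam c.
Proof. by rewrite size_sort size_takel // size_pi zeta_le. Qed.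

Lemma Yc_bound c x : x \in Yc c -> 0 < x <= n.
Proof.
by rewrite mem_sort => /mem_take; rewrite (perm_mem Hpi) mem_iota add1n ltnS.
Qed.

Lemma Yc_sub c c' : c <= c' -> {subset Yc c' <= Yc c}.
Proof.
move=> H x; rewrite !mem_sort -(take_takel pi (zeta_anti lam H)); exact: mem_take.
Qed.

Lemma nth_Ykey c : c < ncols lam -> nth [::] (Ykey lam pi) c = Yc c.
Proof. by move=> Hc; rewrite nth_mkseq. Qed.

Lemma Ykey_key : is_key n lam (Ykey lam pi).
Proof.
have Htab : is_tab n lam (Ykey lam pi).
  apply/and5P; split.
  - by rewrite size_mkseq.
  - by apply/allP => c; rewrite mem_iota add0n => /andP[_ Hc]; rewrite nth_Ykey // Yc_size.
  - by apply/allP => col /mapP [c _ ->]; apply/allP => x /Yc_bound.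
  - by apply/allP => col /mapP [c _ ->]; apply: Yc_sorted.
  - apply/allP => c; rewrite mem_iota add0n => /andP[_ Hc]; apply/allP => i.
    rewrite mem_iota add0n => /andP[_ Hi].
    have Hc1 : c.+1 < ncols lam by case: (ncols lam) Hc.
    rewrite /entry !nth_Ykey ?(ltnW Hc1) //; apply: sub_nth_le; rewrite ?Yc_size //.
    + exact: Yc_sorted.
    + exact: Yc_sorted.
    + exact: Yc_sub.
rewrite /is_key Htab /=; apply/allP => j; rewrite mem_iota add0n => /andP[_ Hj].
apply/allP => l; rewrite mem_iota add0n => /andP[_ Hl]; apply/implyP => Hlj.
by apply/allP => x; rewrite !nth_Ykey //; apply: Yc_sub.
Qed.

End Key.

Lemma Ykey_in_D n lam pi : size lam = n -> perm_eq pi (iota 1 n) -> in_D n lam pi (Ykey lam pi).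
Proof.
move=> Hl Hp; have HK := Ykey_key Hl Hp.
rewrite /in_D (scan_key_fix HK) tab_le_refl andbT; by case/andP: HK.
Qed.

Lemma D_sub n lam pi U : in_D n lam pi U -> tab_le U (Ykey lam pi).
Proof.
case/andP=> HU Hs; exact: tab_le_trans (scan_ge HU) Hs.
Qed.

Lemma take_split (a b : nat) (x : seq nat) : a <= b ->
  take b x = take a x ++ take (b - a) (drop a x).
Proof. by move=> H; rewrite -takeD subnKC. Qed.

Section Inj.
Variables (n : nat) (lam : seq nat) (s t : seq nat).
Hypothesis Hlam : size lam = n.
Hypothesis Hs : is_Rperm n lam s.
Hypothesis Ht : is_Rperm n lam t.
Hypothesis HY : Ykey lam s = Ykey lam t.

Let s0 := sort leq (undup (Rset n lam)).

Lemma qE : qseq n lam = 0 :: rcons s0 n.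
Proof. by []. Qed.

Lemma Rset_lt x : x \in s0 -> x < n.
Proof.
by rewrite mem_sort mem_undup => /mapP [c]; rewrite mem_filter => /andP[H _] ->.
Qed.

Lemma q_sorted : sorted leq (qseq n lam).
Proof.
rewrite qE /= rcons_path (path_sortedE leq_trans) (sort_sorted leq_total) andbT.
apply/andP; split; first by apply/allP.
have := mem_last 0 s0; rewrite inE => /orP[/eqP->//|/Rset_lt/ltnW //].
Qed.

Lemma q_size : size (qseq n lam) = (size s0).+2.
Proof. by rewrite qE /= size_rcons. Qed.

Lemma q_elem h : h.+1 < size (qseq n lam) ->
  (exists2 c, c < ncols lam & nth 0 (qseq n lam) h.+1 = zeta lam c) \/ nth 0 (qseq n lam) h.+1 = n.
Proof.
rewrite q_size ltnS qE /= nth_rcons => Hh.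
case: ifP => Hlt.
  left; have : nth 0 s0 h \in s0 by apply: mem_nth.
  rewrite mem_sort mem_undup => /mapP [c]; rewrite mem_filter mem_iota add0n => /andP[_ /andP[_ Hc]] ->.
  by exists c.
right; have -> : h == size s0 by rewrite eqn_leq -ltnS Hh leqNgt Hlt.
by [].
Qed.

Lemma perm_take_t x : perm_eq x (iota 1 n) -> take n x = x.
Proof. by move=> H; rewrite take_oversize // (perm_size H) size_iota. Qed.

Lemma perm_prefix b : (exists2 c, c < ncols lam & b = zeta lam c) \/ b = n ->
  perm_eq (take b s) (take b t).
Proof.
case=> [[c Hc ->]|->].
  have E : sort leq (take (zeta lam c) s) = sort leq (take (zeta lam c) t).
    by have := congr1 (nth [::] ^~ c) HY; rewrite /Ykey !nth_mkseq.
  apply: (@perm_trans _ (sort leq (take (zeta lam c) s))).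
    by rewrite perm_sym; apply: permEl; apply: perm_sort.
  by rewrite E; apply: permEl; apply: perm_sort.
case: Hs => Ps _; case: Ht => Pt _.
by rewrite !perm_take_t //; apply: perm_trans Ps _; rewrite perm_sym.
Qed.

Lemma seg_sorted x h : is_Rperm n lam x -> h.+1 < size (qseq n lam) ->
  sorted ltn (take (nth 0 (qseq n lam) h.+1 - nth 0 (qseq n lam) h) (drop (nth 0 (qseq n lam) h) x)).
Proof.
case=> _ Hb Hh; apply/(sortedP 0) => i Hi.
set a := nth 0 (qseq n lam) h; set b := nth 0 (qseq n lam) h.+1.
have Hib : i.+1 < b - a by move: Hi; rewrite size_take_min => H; exact: (leq_trans H (geq_minl _ _)).
rewrite !nth_take ?(ltn_trans (ltnSn i)) // !nth_drop.
have := Hb h Hh (a + i.+1) (a + i.+2); rewrite -/a -/b.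
have H1 : a < a + i.+1 by lia.
have H2 : a + i.+1 < a + i.+2 by lia.
have H3 : a + i.+2 <= b by lia.
by move/(_ H1 H2 H3); rewrite !addnS.
Qed.

Lemma prefix_eq h : h < size (qseq n lam) ->
  take (nth 0 (qseq n lam) h) s = take (nth 0 (qseq n lam) h) t.
Proof.
elim: h => [|h IH] Hh; first by rewrite qE /= !take0.
have Hab : nth 0 (qseq n lam) h <= nth 0 (qseq n lam) h.+1.
  by apply: (sorted_leq_nth leq_trans leqnn 0 q_sorted); rewrite ?inE //; apply: ltnW.
have P := perm_prefix (q_elem Hh).
rewrite (take_split s Hab) (take_split t Hab) in P *.
rewrite IH ?(ltnW Hh) // perm_cat2l in P.
rewrite IH ?(ltnW Hh) //; congr (_ ++ _).
apply: (irr_sorted_eq ltn_trans ltnn); try exact: seg_sorted.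
exact: perm_mem.
Qed.

Lemma Ykey_inj : s = t.
Proof.
have Hq : (size (qseq n lam)).-1 < size (qseq n lam) by rewrite q_size.
have := prefix_eq Hq.
have -> : nth 0 (qseq n lam) (size (qseq n lam)).-1 = n.
  by rewrite q_size qE /= nth_rcons ltnn eqxx.
case: Hs => Ps _; case: Ht => Pt _.
by rewrite !perm_take_t.
Qed.

End Inj.
Unset Implicit Arguments.


Theorem fact6p1 (n : nat) (lam : seq nat) (T Y : seq (seq nat)) (pi : seq nat) :
  1 <= n -> is_partition n lam -> is_tab n lam T -> is_key n lam Y -> is_Rperm n lam pi ->
  (* (i) *)
  is_key n lam (scan T) /\
  (* (ii) *)
  (tab_le T (scan T) /\ scan Y = Y) /\
  (* (iii) *)
  (in_D n lam pi (Ykey lam pi) /\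
   forall U, in_D n lam pi U -> in_ideal n lam (Ykey lam pi) U) /\
  (* (iv) *)
  ((in_D n lam pi (Ykey lam pi) /\
    forall U, in_D n lam pi U -> tab_le (Ykey lam pi) U -> U = Ykey lam pi) /\
   forall M, in_D n lam pi M ->
     (forall U, in_D n lam pi U -> tab_le M U -> U = M) -> M = Ykey lam pi) /\
  (* (v) *)
  (forall sigma, is_Rperm n lam sigma ->
     (exists U, in_D n lam sigma U) /\ (forall U, in_D n lam sigma U -> is_tab n lam U)) /\
  (forall sigma tau, is_Rperm n lam sigma -> is_Rperm n lam tau -> sigma <> tau ->
     ~ (forall U, in_D n lam sigma U = in_D n lam tau U)).
Proof.
move=> Hn /andP[/eqP Hlam _] HT HY Hpi.
have HD : forall p, is_Rperm n lam p -> in_D n lam p (Ykey lam p).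
  by move=> p [Hp _]; apply: Ykey_in_D.
have Hpi' := HD pi Hpi.
split; first exact: (scan_is_key HT).
split; first by split; [exact: (scan_ge HT) | exact: (scan_key_fix HY)].
split.
  split=> // U HU; rewrite /in_ideal (D_sub HU) andbT; by case/andP: HU.
split.
  split; first (split=> // U HU HYU; exact: tab_le_anti (D_sub HU) HYU).
  move=> M HM Hmax; apply/esym; apply: Hmax => //; exact: (D_sub HM).
split.
  move=> sigma Hs; split; first by exists (Ykey lam sigma); apply: HD.
  by move=> U /andP[].
move=> sigma tau Hs Ht Hne Heq; apply: Hne.
apply: (Ykey_inj Hlam Hs Ht).
apply: tab_le_anti.
  by apply: (@D_sub n lam tau (Ykey lam sigma)); rewrite -Heq; apply: HD.
by apply: (@D_sub n lam sigma (Ykey lam tau)); rewrite Heq; apply: HD.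
Qed.
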